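(* Let $a,b,c,p\in\mathbb{C}$ with $-c\notin\mathbb{N}\cup\{0\}$. Suppose that \[ e^{pz}F(a,b;c;z)=\sum_{n=0}^\infty u_nz^n,\qquad |z|<1. \] Then $u_0=1$, $u_1=\frac{ab}{c}+p$, $u_2=\frac{a(1+a)b(1+b)}{2c(1+c)}+\frac{abp}{c}+\frac{p^2}{2}$, and for all integers $n\ge2$, \[ u_{n+1}=\frac{(a+n)(b+n)+p(c+2n)}{(n+1)(c+n)}u_n-\frac{p(a+b+2n+p-1)}{(n+1)(c+n)}u_{n-1}+\frac{p^2}{(n+1)(c+n)}u_{n-2}. \]
   Context: For $a\in\mathbb{C}$, $(a)_n=a(a+1)\cdots(a+n-1)$ denotes the Pochhammer symbol, with $(a)_0=1$. For $a,b,c\in\mathbb{C}$ with $-c\notin\mathbb{N}\cup\{0\}$, the Gaussian hypergeometric function is $F(a,b;c;z)=\sum_{n=0}^\infty \frac{(a)_n(b)_n}{(c)_n\,n!}z^n$, $|z|<1$. *)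

(* Defs.v *)
From Stdlib Require Import Reals Factorial.
From Coquelicot Require Import Coquelicot.
Open Scope C_scope.

Fixpoint poch (a : C) (n : nat) : C :=
  match n with
  | O => 1
  | S k => poch a k * (a + RtoC (INR k))
  end.

Definition hyp_term (a b c z : C) (n : nat) : C :=
  poch a n * poch b n / (poch c n * RtoC (INR (Factorial.fact n))) * z ^ n.

Definition cexp_term (w : C) (n : nat) : C := w ^ n / RtoC (INR (Factorial.fact n)).

Definition c_admissible (c : C) : Prop := forall n : nat, c <> - RtoC (INR n).

(* Main.v *)
Require Import Defs.
From Stdlib Require Import Reals Factorial Lia Lra.
From Coquelicot Require Import Coquelicot.
Open Scope C_scope.

Fixpoint csum (f : nat -> C) (n : nat) : C :=
  match n with O => f O | S k => csum f k + f (S k) end.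

Lemma csum_ext_loc (f g : nat -> C) n :
  (forall k, (k <= n)%nat -> f k = g k) -> csum f n = csum g n.
Proof.
  induction n; intros H; simpl.
  - apply H; lia.
  - rewrite IHn by (intros; apply H; lia). rewrite H by lia. reflexivity.
Qed.

Lemma csum_plus (f g : nat -> C) n : csum f n + csum g n = csum (fun k => f k + g k) n.
Proof. induction n; simpl; [reflexivity|]. rewrite <- IHn. ring. Qed.

Lemma csum_scal (f : nat -> C) (w : C) n : w * csum f n = csum (fun k => w * f k) n.
Proof. induction n; simpl; [reflexivity|]. rewrite <- IHn. ring. Qed.

Lemma csum_zero (f : nat -> C) n : (forall k, (k <= n)%nat -> f k = 0) -> csum f n = 0.
Proof.
  intros H. rewrite (csum_ext_loc f (fun _ => 0)) by auto. clear H.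
  induction n; simpl; [reflexivity|]. rewrite IHn. ring.
Qed.

Definition hc (a b c : C) (n : nat) : C :=
  poch a n * poch b n / (poch c n * RtoC (INR (fact n))).
Definition ec (p : C) (n : nat) : C := p ^ n / RtoC (INR (fact n)).
Definition vc a b c p n := csum (fun k => ec p k * hc a b c (n - k)) n.

Lemma RtoC_nz (r : R) : r <> 0%R -> RtoC r <> 0.
Proof. intros H E. apply H. apply RtoC_inj. exact E. Qed.

Lemma fact_nz n : RtoC (INR (fact n)) <> 0.
Proof. apply RtoC_nz, INR_fact_neq_0. Qed.

Lemma Sn_nz n : RtoC (INR n) + 1 <> 0.
Proof. rewrite <- RtoC_plus. apply RtoC_nz. pose proof (pos_INR n). lra. Qed.

Lemma cn_nz c n : c_admissible c -> c + RtoC (INR n) <> 0.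
Proof. intros Hc E. apply (Hc n). rewrite <- (Cplus_0_l (- _)). rewrite <- E. ring. Qed.

Lemma poch_nz c n : c_admissible c -> poch c n <> 0.
Proof.
  intros Hc. induction n; simpl.
  - apply C1_nz.
  - apply Cmult_neq_0; auto. apply cn_nz; auto.
Qed.

Lemma h_rec a b c m : c_admissible c ->
  hc a b c (S m) * ((RtoC (INR m) + 1) * (c + RtoC (INR m)))
  = (a + RtoC (INR m)) * (b + RtoC (INR m)) * hc a b c m.
Proof.
  intros Hc. unfold hc. simpl poch.
  rewrite fact_simpl, mult_INR, S_INR, RtoC_mult, RtoC_plus.
  pose proof (poch_nz c m Hc). pose proof (cn_nz c m Hc).
  pose proof (fact_nz m). pose proof (Sn_nz m).
  field. repeat split; auto.
Qed.

Lemma e_rec p k : ec p (S k) * RtoC (INR (S k)) = p * ec p k.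
Proof.
  unfold ec. rewrite fact_simpl, mult_INR, RtoC_mult.
  pose proof (fact_nz k).
  assert (RtoC (INR (S k)) <> 0) by (rewrite S_INR, RtoC_plus; apply Sn_nz).
  simpl Cpow. field. split; auto.
Qed.

Lemma shift p (H : nat -> C) m :
  p * csum (fun j => ec p j * H j) m
  = csum (fun j => RtoC (INR j) * ec p j * H (j - 1)%nat) (S m).
Proof.
  induction m.
  - simpl csum. replace (1 - 1)%nat with 0%nat by lia.
    transitivity ((p * ec p 0) * H 0%nat); [ring|].
    rewrite <- (e_rec p 0). simpl INR. ring.
  - change (csum (fun j => RtoC (INR j) * ec p j * H (j - 1)%nat) (S (S m)))
      with (csum (fun j => RtoC (INR j) * ec p j * H (j - 1)%nat) (S m)
            + RtoC (INR (S (S m))) * ec p (S (S m)) * H (S (S m) - 1)%nat).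
    rewrite <- IHm. replace (S (S m) - 1)%nat with (S m) by lia.
    simpl (csum _ (S m)).
    transitivity (p * csum (fun j : nat => ec p j * H j) m + (p * ec p (S m)) * H (S m)); [ring|].
    rewrite <- e_rec. ring.
Qed.

Lemma csum_S f n : csum f (S n) = csum f n + f (S n).
Proof. reflexivity. Qed.

Lemma key_sum a b c p n : c_admissible c ->
  let N := RtoC (INR n) in
  csum (fun j => let J := RtoC (INR j) in
          (N + 1) * (c + N) * (ec p j * hc a b c (S n - j))
          + (- (c + 2 * N)) * (J * (ec p j * hc a b c (S n - j)))
          + J * (J - 1) * (ec p j * hc a b c (S n - j))) (S n)
  + csum (fun j => let J := RtoC (INR j) in
          (- ((a + N) * (b + N))) * (ec p j * hc a b c (n - j))
          + (a + b + 2 * N - 1) * (J * (ec p j * hc a b c (n - j)))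
          + (-1) * (J * (J - 1) * (ec p j * hc a b c (n - j)))) n = 0.
Proof.
  intros Hc N. rewrite csum_S. cbv beta zeta.
  replace (S n - S n)%nat with 0%nat by lia.
  rewrite S_INR, RtoC_plus. fold N.
  rewrite <- Cplus_assoc, (Cplus_comm _ (csum _ n)), Cplus_assoc, csum_plus.
  rewrite csum_zero; [ring|].
  intros j Hj. cbv zeta.
  remember (n - j)%nat as m eqn:Hm.
  replace (S n - j)%nat with (S m) by lia.
  assert (HN : N = RtoC (INR m) + RtoC (INR j)).
  { unfold N. rewrite <- RtoC_plus, <- plus_INR. f_equal. f_equal. lia. }
  rewrite HN. pose proof (h_rec a b c m Hc) as Hr.
  set (M := RtoC (INR m)) in *. set (J := RtoC (INR j)).
  set (hS := hc a b c (S m)) in *. set (h0 := hc a b c m) in *.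
  transitivity (ec p j * (hS * ((M + 1) * (c + M)) - (a + M) * (b + M) * h0)); [ring|].
  rewrite Hr. ring.
Qed.

Lemma INR_pred j : RtoC (INR j) = RtoC (INR (S j)) - 1.
Proof. rewrite S_INR, RtoC_plus. ring. Qed.

Lemma v_rec a b c p m : c_admissible c ->
  let n := S (S m) in
  let N := RtoC (INR n) in
  (N + 1) * (c + N) * vc a b c p (S n)
  = ((a + N) * (b + N) + p * (c + 2 * N)) * vc a b c p n
    - p * (a + b + 2 * N + p - 1) * vc a b c p (S m)
    + p ^ 2 * vc a b c p m.
Proof.
  intros Hc n N.
  pose proof (key_sum a b c p n Hc) as K. cbv zeta in K. fold N in K.
  set (U := fun j => ec p j * hc a b c (S n - j)).
  set (T := fun j => ec p j * hc a b c (n - j)).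
  assert (HU1 : p * vc a b c p n = csum (fun j => RtoC (INR j) * U j) (S n)).
  { unfold vc. rewrite (shift p (fun j => hc a b c (n - j))). apply csum_ext_loc.
    intros j _. unfold U. destruct j. simpl INR. ring.
    replace (n - (S j - 1))%nat with (S n - S j)%nat by lia. ring. }
  assert (HT1 : p * vc a b c p (S m) = csum (fun j => RtoC (INR j) * T j) n).
  { unfold vc. rewrite (shift p (fun j => hc a b c (S m - j))). apply csum_ext_loc.
    intros j _. unfold T. destruct j. simpl INR. ring.
    replace (S m - (S j - 1))%nat with (n - S j)%nat by (unfold n; lia). ring. }
  assert (HU2 : p * p * vc a b c p (S m)
                = csum (fun j => RtoC (INR j) * (RtoC (INR j) - 1) * U j) (S n)).
  { rewrite <- Cmult_assoc, HT1.
    rewrite (csum_ext_loc _ (fun j => ec p j * (RtoC (INR j) * hc a b c (n - j))))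
      by (intros; unfold T; ring).
    rewrite shift. apply csum_ext_loc.
    intros j _. unfold U. destruct j. simpl INR. ring.
    replace (n - (S j - 1))%nat with (S n - S j)%nat by lia.
    replace (S j - 1)%nat with j by lia. rewrite (INR_pred j). ring. }
  assert (HT2 : p * p * vc a b c p m
                = csum (fun j => RtoC (INR j) * (RtoC (INR j) - 1) * T j) n).
  { rewrite <- Cmult_assoc.
    assert (H1 : p * vc a b c p m
                 = csum (fun j => ec p j * (RtoC (INR j) * hc a b c (S m - j))) (S m)).
    { unfold vc. rewrite (shift p (fun j => hc a b c (m - j))). apply csum_ext_loc.
      intros j _. destruct j. simpl INR. ring.
      replace (m - (S j - 1))%nat with (S m - S j)%nat by lia. ring. }
    rewrite H1, shift. apply csum_ext_loc.
    intros j _. unfold T. destruct j. simpl INR. ring.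
    replace (S m - (S j - 1))%nat with (n - S j)%nat by (unfold n; lia).
    replace (S j - 1)%nat with j by lia. rewrite (INR_pred j). ring. }
  assert (EU : vc a b c p (S n) = csum U (S n)) by reflexivity.
  assert (ET : vc a b c p n = csum T n) by reflexivity.
  assert (L3 : forall (f g h : nat -> C) al be ga k,
     csum (fun j => al * f j + be * g j + ga * h j) k
     = al * csum f k + be * csum g k + ga * csum h k).
  { intros f g h al be ga k. induction k; simpl; [ring|]. rewrite IHk. ring. }
  assert (K' : ((N + 1) * (c + N) * csum U (S n) + (- (c + 2 * N)) * csum (fun j => RtoC (INR j) * U j) (S n)
     + 1 * csum (fun j => RtoC (INR j) * (RtoC (INR j) - 1) * U j) (S n))
     + ((- ((a + N) * (b + N))) * csum T n + (a + b + 2 * N - 1) * csum (fun j => RtoC (INR j) * T j) n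
     + (-1) * csum (fun j => RtoC (INR j) * (RtoC (INR j) - 1) * T j) n) = 0).
  { rewrite <- !L3. rewrite <- K. f_equal; apply csum_ext_loc; intros; unfold U, T; ring. }
  apply Ceq_minus. rewrite <- K'.
  rewrite EU, ET, <- HU1, <- HT1, <- HU2, <- HT2, <- ET. simpl Cpow. ring.
Qed.

Lemma v_init a b c p : c_admissible c ->
  vc a b c p 0 = 1 /\ vc a b c p 1 = a * b / c + p /\
  vc a b c p 2 = a * (1 + a) * b * (1 + b) / (2 * c * (1 + c)) + a * b * p / c + p ^ 2 / 2.
Proof.
  intros Hc. pose proof (cn_nz c 0 Hc) as H0. pose proof (cn_nz c 1 Hc) as H1.
  simpl INR in H0, H1. rewrite Cplus_0_r in H0.
  assert (H2 : RtoC 2 <> 0) by (apply RtoC_nz; lra).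
  unfold vc, hc, ec. simpl. repeat split.
  - field.
  - field. auto.
  - rewrite Cplus_0_r. replace (RtoC (1 + 1)) with (RtoC 2) by (f_equal; lra).
    replace (RtoC (1 + 1 + 1)) with (RtoC 3) by (f_equal; lra). 
    field. repeat split; auto. rewrite Cplus_comm. exact H1.
Qed.

Lemma Re_sum_n (f : nat -> C) n : Re (sum_n f n) = sum_n (fun k => Re (f k)) n.
Proof.
  induction n. rewrite !sum_O. reflexivity.
  rewrite !sum_Sn, <- IHn. reflexivity.
Qed.

Lemma Im_sum_n (f : nat -> C) n : Im (sum_n f n) = sum_n (fun k => Im (f k)) n.
Proof.
  induction n. rewrite !sum_O. reflexivity.
  rewrite !sum_Sn, <- IHn. reflexivity.
Qed.

Lemma is_series_Re (f : nat -> C) l : is_series f l -> is_series (fun n => Re (f n)) (Re l).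
Proof.
  unfold is_series. intros H.
  apply (filterlim_ext (fun n => Re (sum_n f n))). intro; apply Re_sum_n.
  apply filterlim_locally. intros eps.
  generalize (proj1 (filterlim_locally _ _) H eps). apply filter_imp.
  intros n [H1 H2]. exact H1.
Qed.

Lemma is_series_Im (f : nat -> C) l : is_series f l -> is_series (fun n => Im (f n)) (Im l).
Proof.
  unfold is_series. intros H.
  apply (filterlim_ext (fun n => Im (sum_n f n))). intro; apply Im_sum_n.
  apply filterlim_locally. intros eps.
  generalize (proj1 (filterlim_locally _ _) H eps). apply filter_imp.
  intros n [H1 H2]. exact H2.
Qed.

Lemma is_series_C_of (f : nat -> C) l :
  is_series (fun n => Re (f n)) (Re l) -> is_series (fun n => Im (f n)) (Im l) -> is_series f l.
Proof.
  unfold is_series. intros H1 H2.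
  apply (filterlim_ext _ (fun n => Re (sum_n f n))) in H1; [|intro n; symmetry; apply Re_sum_n].
  apply (filterlim_ext _ (fun n => Im (sum_n f n))) in H2; [|intro n; symmetry; apply Im_sum_n].
  apply filterlim_locally. intros eps.
  generalize (filter_and _ _ (proj1 (filterlim_locally _ _) H1 eps)
                             (proj1 (filterlim_locally _ _) H2 eps)).
  apply filter_imp. intros n [A B]. split; assumption.
Qed.

Lemma sum_ge_term (g : nat -> R) N n : (forall k, 0 <= g k) -> (n <= N)%nat -> g n <= sum_f_R0 g N.
Proof.
  intros Hg. induction N; intros Hn.
  - replace n with 0%nat by lia. simpl. lra.
  - simpl. destruct (Nat.eq_dec n (S N)) as [->|Hne].
    + pose proof (cond_pos_sum g N Hg). lra.
    + pose proof (IHN ltac:(lia)). pose proof (Hg (S N)). lra.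
Qed.

Lemma lim0_bounded (f : nat -> R) : is_lim_seq f 0 -> exists M, forall n, Rabs (f n) <= M.
Proof.
  intros H. apply is_lim_seq_spec in H. destruct (H (mkposreal 1 Rlt_0_1)) as [N HN].
  exists (1 + sum_f_R0 (fun k => Rabs (f k)) N)%R. intros n.
  pose proof (cond_pos_sum (fun k => Rabs (f k)) N (fun k => Rabs_pos (f k))).
  destruct (Compare_dec.le_lt_dec N n) as [Hle|Hlt].
  - specialize (HN n Hle). simpl in HN. rewrite Rminus_0_r in HN. lra.
  - pose proof (sum_ge_term (fun k => Rabs (f k)) N n (fun k => Rabs_pos (f k)) ltac:(lia)).
    simpl in *. lra.
Qed.

Lemma cseries_bounded (t : nat -> C) l : is_series t l -> exists M, forall n, Cmod (t n) <= M.
Proof.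
  intros H.
  destruct (lim0_bounded _ (ex_series_lim_0 _ (ex_intro _ _ (is_series_Re t l H)))) as [M1 H1].
  destruct (lim0_bounded _ (ex_series_lim_0 _ (ex_intro _ _ (is_series_Im t l H)))) as [M2 H2].
  exists (sqrt 2 * (Rabs M1 + Rabs M2))%R. intros n.
  eapply Rle_trans. apply Cmod_2Rmax.
  apply Rmult_le_compat_l. apply sqrt_pos.
  apply Rmax_lub.
  - pose proof (H1 n). pose proof (Rle_abs M1). pose proof (Rabs_pos M2). unfold Re in *. simpl in *. lra.
  - pose proof (H2 n). pose proof (Rle_abs M2). pose proof (Rabs_pos M1). unfold Im in *. simpl in *. lra.
Qed.

Lemma abs_conv (q : nat -> C) (z0 w : C) :
  (exists M, forall n, Cmod (q n * z0 ^ n) <= M) -> (Cmod w < Cmod z0)%R ->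
  ex_series (fun n => Cmod (q n * w ^ n)).
Proof.
  intros [M HM] Hw. pose proof (Cmod_ge_0 w).
  set (r := (Cmod w / Cmod z0)%R).
  assert (Hz : (0 < Cmod z0)%R) by lra.
  assert (Hr0 : (0 <= r)%R) by (unfold r; apply Rdiv_le_0_compat; lra).
  assert (Hr1 : (r < 1)%R) by (unfold r; apply (Rmult_lt_reg_r (Cmod z0)); [lra|]; unfold Rdiv; rewrite Rmult_assoc, Rinv_l by lra; lra).
  apply (@ex_series_le R_AbsRing R_CompleteNormedModule _ (fun n => M * r ^ n)%R).
  - intros n. unfold norm; simpl. rewrite Rabs_pos_eq by apply Cmod_ge_0.
    rewrite Cmod_mult, Cmod_pow.
    replace (Cmod w) with (r * Cmod z0)%R by (unfold r; field; lra).
    rewrite Rpow_mult_distr.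
    specialize (HM n). rewrite Cmod_mult, Cmod_pow in HM.
    pose proof (pow_le r n Hr0).
    replace (Cmod (q n) * (r ^ n * Cmod z0 ^ n))%R with ((Cmod (q n) * Cmod z0 ^ n) * r ^ n)%R by ring.
    apply Rmult_le_compat_r; auto.
  - apply (ex_series_scal_l (K:=R_AbsRing) (V:=R_NormedModule) M).
    apply ex_series_geom. rewrite Rabs_pos_eq; lra.
Qed.

Lemma re_add (x y : C) : Re (x + y) = (Re x + Re y)%R. Proof. reflexivity. Qed.
Lemma im_add (x y : C) : Im (x + y) = (Im x + Im y)%R. Proof. reflexivity. Qed.
Lemma re_mul (x y : C) : Re (x * y) = (Re x * Re y - Im x * Im y)%R. Proof. reflexivity. Qed.
Lemma im_mul (x y : C) : Im (x * y) = (Re x * Im y + Im x * Re y)%R. Proof. reflexivity. Qed.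

Lemma Re_csum (f g : nat -> C) m :
  Re (csum (fun k => f k * g k) m)
  = (sum_f_R0 (fun k => Re (f k) * Re (g k)) m - sum_f_R0 (fun k => Im (f k) * Im (g k)) m)%R.
Proof.
  induction m.
  - simpl csum. simpl sum_f_R0. apply re_mul.
  - rewrite csum_S, re_add, IHm, re_mul, !tech5. ring.
Qed.

Lemma Im_csum (f g : nat -> C) m :
  Im (csum (fun k => f k * g k) m)
  = (sum_f_R0 (fun k => Re (f k) * Im (g k)) m + sum_f_R0 (fun k => Im (f k) * Re (g k)) m)%R.
Proof.
  induction m.
  - simpl csum. simpl sum_f_R0. apply im_mul.
  - rewrite csum_S, im_add, IHm, im_mul, !tech5. ring.
Qed.

Lemma im_le_Cmod (c : C) : Rabs (Im c) <= Cmod c.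
Proof. eapply Rle_trans; [|apply Rmax_Cmod]. apply Rmax_r. Qed.

Lemma abs_Re (x : nat -> C) : ex_series (fun n => Cmod (x n)) -> ex_series (fun n => Rabs (Re (x n))).
Proof.
  intros H. apply (@ex_series_le R_AbsRing R_CompleteNormedModule _ (fun n => Cmod (x n))); auto.
  intros n. unfold norm; simpl. rewrite Rabs_Rabsolu. apply re_le_Cmod.
Qed.

Lemma abs_Im (x : nat -> C) : ex_series (fun n => Cmod (x n)) -> ex_series (fun n => Rabs (Im (x n))).
Proof.
  intros H. apply (@ex_series_le R_AbsRing R_CompleteNormedModule _ (fun n => Cmod (x n))); auto.
  intros n. unfold norm; simpl. rewrite Rabs_Rabsolu. apply im_le_Cmod.
Qed.

Lemma cauchy_C (x y : nat -> C) X Y :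
  is_series x X -> is_series y Y ->
  ex_series (fun n => Cmod (x n)) -> ex_series (fun n => Cmod (y n)) ->
  is_series (fun n => csum (fun k => x k * y (n - k)%nat) n) (X * Y).
Proof.
  intros Hx Hy Ax Ay.
  pose proof (is_series_Re _ _ Hx) as Rx. pose proof (is_series_Im _ _ Hx) as Ix.
  pose proof (is_series_Re _ _ Hy) as Ry. pose proof (is_series_Im _ _ Hy) as Iy.
  pose proof (abs_Re _ Ax) as ARx. pose proof (abs_Im _ Ax) as AIx.
  pose proof (abs_Re _ Ay) as ARy. pose proof (abs_Im _ Ay) as AIy.
  apply is_series_C_of.
  - pose proof (is_series_minus _ _ _ _ (is_series_mult _ _ _ _ Rx Ry ARx ARy)
                                       (is_series_mult _ _ _ _ Ix Iy AIx AIy)) as HH.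
    rewrite re_mul.
    eapply is_series_ext; [|exact HH]. intros n. simpl.
    rewrite (Re_csum x (fun k => y (n - k)%nat)). reflexivity.
  - pose proof (is_series_plus _ _ _ _ (is_series_mult _ _ _ _ Rx Iy ARx AIy)
                                      (is_series_mult _ _ _ _ Ix Ry AIx ARy)) as HH.
    rewrite im_mul.
    eapply is_series_ext; [|exact HH]. intros n. simpl.
    rewrite (Im_csum x (fun k => y (n - k)%nat)). reflexivity.
Qed.

Lemma uniq_R (a : nat -> R) :
  (forall x, Rabs x < 1 -> is_series (fun n => a n * x ^ n)%R 0%R) ->
  (exists M, forall n, Rabs (a n * (1/2) ^ n) <= M) -> forall n, a n = 0%R.
Proof.
  intros H [M HM] n.
  assert (Hr : Rbar_lt 0 (CV_radius a)).
  { destruct (CV_radius_bounded a) as [Hub _].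
    assert (Hle := Hub (1/2)%R (ex_intro _ M HM)).
    eapply Rbar_lt_le_trans; [|exact Hle]. simpl; lra. }
  apply (PSeries_ext_recip a (fun _ => 0%R) n Hr).
  - rewrite CV_radius_const_0. simpl; auto.
  - exists (mkposreal 1 Rlt_0_1). intros x Hx. rewrite PSeries_const_0.
    apply is_pseries_unique. apply is_pseries_R. apply H.
    unfold ball in Hx; simpl in Hx. unfold AbsRing_ball, abs, minus, plus, opp in Hx; simpl in Hx.
    rewrite Ropp_0, Rplus_0_r in Hx. exact Hx.
Qed.

Lemma uniq_C (w : nat -> C) :
  (forall x : R, Rabs x < 1 -> is_series (fun n => w n * RtoC x ^ n) (RtoC 0)) -> forall n, w n = RtoC 0.
Proof.
  intros H.
  assert (Hh : Rabs (1/2) < 1) by (rewrite Rabs_pos_eq; lra).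
  destruct (cseries_bounded _ _ (H _ Hh)) as [M HM].
  assert (Hre : forall n, Re (w n) = 0%R).
  { apply uniq_R.
    - intros x Hx. pose proof (is_series_Re _ _ (H x Hx)) as HH.
      eapply is_series_ext; [|exact HH]. intros n. cbv beta.
      rewrite <- RtoC_pow, re_scal_r. reflexivity.
    - exists M. intros n. eapply Rle_trans; [|apply (HM n)].
      rewrite <- RtoC_pow, <- re_scal_r. apply re_le_Cmod. }
  assert (Him : forall n, Im (w n) = 0%R).
  { apply uniq_R.
    - intros x Hx. pose proof (is_series_Im _ _ (H x Hx)) as HH.
      eapply is_series_ext; [|exact HH]. intros n. cbv beta.
      rewrite <- RtoC_pow, im_scal_r. reflexivity.
    - exists M. intros n. eapply Rle_trans; [|apply (HM n)].
      rewrite <- RtoC_pow, <- im_scal_r. apply im_le_Cmod. }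
  intros n. specialize (Hre n). specialize (Him n).
  destruct (w n) as [r i]. unfold Re, Im in *. simpl in *. subst. reflexivity.
Qed.

Lemma cexp_eq p z n : cexp_term (p * z) n = ec p n * z ^ n.
Proof.
  unfold cexp_term, ec. rewrite Cpow_mult_l. pose proof (fact_nz n). field. auto.
Qed.

Theorem theorem3p1 (a b c p : C) (u : nat -> C) :
  c_admissible c ->
  (forall z : C, (Cmod z < 1)%R ->
     exists E Fz : C,
       is_series (cexp_term (p * z)) E /\
       is_series (hyp_term a b c z) Fz /\
       is_series (fun n => u n * z ^ n) (E * Fz)) ->
  u 0%nat = 1 /\
  u 1%nat = a * b / c + p /\
  u 2%nat = a * (1 + a) * b * (1 + b) / (2 * c * (1 + c)) + a * b * p / c + p ^ 2 / 2 /\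
  (forall n : nat, (2 <= n)%nat ->
     let N := RtoC (INR n) in
     u (S n) =
       ((a + N) * (b + N) + p * (c + 2 * N)) / ((N + 1) * (c + N)) * u n
       - p * (a + b + 2 * N + p - 1) / ((N + 1) * (c + N)) * u (n - 1)%nat
       + p ^ 2 / ((N + 1) * (c + N)) * u (n - 2)%nat).
Proof.
  intros Hc Hser.
  assert (Hconv : forall z : C, (Cmod z < 1)%R -> exists E F : C,
            is_series (fun n => u n * z ^ n) (E * F) /\
            is_series (fun n => vc a b c p n * z ^ n) (E * F)).
  { intros z Hz. pose proof (Cmod_ge_0 z).
    set (z0 := RtoC ((1 + Cmod z) / 2)).
    assert (Hz0 : Cmod z0 = ((1 + Cmod z) / 2)%R).
    { unfold z0. rewrite Cmod_R, Rabs_pos_eq; lra. }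
    destruct (Hser z0 ltac:(rewrite Hz0; lra)) as [E0 [F0 [He0 [Hh0 _]]]].
    destruct (cseries_bounded _ _ He0) as [M1 HM1].
    destruct (cseries_bounded _ _ Hh0) as [M2 HM2].
    assert (Ae : ex_series (fun n => Cmod (ec p n * z ^ n))).
    { apply (abs_conv (ec p) z0 z); [|rewrite Hz0; lra].
      exists M1. intros n. rewrite <- cexp_eq. apply HM1. }
    assert (Ah : ex_series (fun n => Cmod (hc a b c n * z ^ n))).
    { apply (abs_conv (hc a b c) z0 z); [|rewrite Hz0; lra].
      exists M2. intros n. apply HM2. }
    destruct (Hser z Hz) as [E [F [He [Hh Hu]]]].
    exists E, F. split; auto.
    assert (He' : is_series (fun n => ec p n * z ^ n) E).
    { eapply is_series_ext; [|exact He]. intros n. apply cexp_eq. }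
    pose proof (cauchy_C _ _ _ _ He' Hh Ae Ah) as HC.
    eapply is_series_ext; [|exact HC]. intros n. cbv beta.
    unfold vc. rewrite Cmult_comm, csum_scal. apply csum_ext_loc. intros k Hk.
    assert (Hp : z ^ n = z ^ k * z ^ (n - k)%nat).
    { rewrite <- Cpow_add_r. f_equal. lia. }
    rewrite Hp. unfold hyp_term. fold (hc a b c (n - k)). ring. }
  assert (Huv : forall n, u n = vc a b c p n).
  { intros n. apply Ceq_minus. revert n.
    apply (uniq_C (fun n => u n - vc a b c p n)).
    intros x Hx. destruct (Hconv (RtoC x) ltac:(rewrite Cmod_R; exact Hx)) as [E [F [H1 H2]]].
    pose proof (is_series_minus _ _ _ _ H1 H2) as HH.
    replace (RtoC 0) with (plus (E * F) (opp (E * F))) by (exact (Cplus_opp_r _)).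
    assert (E2 : forall n, u n * RtoC x ^ n + - (vc a b c p n * RtoC x ^ n)
                  = (u n - vc a b c p n) * RtoC x ^ n) by (intros; ring).
    eapply is_series_ext; [|exact HH]. intros n. exact (E2 n). }
  destruct (v_init a b c p Hc) as [I0 [I1 I2]].
  rewrite !Huv. split; [exact I0|]. split; [exact I1|]. split; [exact I2|].
  intros n Hn N. rewrite !Huv.
  destruct n as [|[|m]]; [lia|lia|].
  replace (S (S m) - 1)%nat with (S m) by lia.
  replace (S (S m) - 2)%nat with m by lia.
  pose proof (v_rec a b c p m Hc) as R. cbv zeta in R. fold N in R.
  pose proof (Sn_nz (S (S m))) as D1. pose proof (cn_nz c (S (S m)) Hc) as D2.
  fold N in D1, D2.
  assert (HD : (N + 1) * (c + N) <> 0) by (apply Cmult_neq_0; auto).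
  transitivity (((N + 1) * (c + N) * vc a b c p (S (S (S m)))) / ((N + 1) * (c + N))).
  { field. auto. }
  rewrite R. field. auto.
Qed.
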